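(* Let $\mathcal C$ be a Clifford circuit with linear outcome code $\mathcal O(\mathcal C)$. For all $u,v\in\mathcal O(\mathcal C)^\perp$, $[\overleftarrow{F(u)},\overleftarrow{F(v)}]=0$.
   Context: A Clifford circuit on $n$ qubits is a finite sequence of operations, each a unitary Clifford gate or the measurement of a Hermitian $n$-qubit Pauli, each with a level in $\{1,2,\dots\}$; operations of equal level have disjoint supports and levels are nondecreasing; depth $\Delta$ = maximal level. In circuit order the $j$-th measurement measures $S_j$ at level $\ell_j$ ($j=1,\dots,m$); outcome $o_j=0$ for eigenvalue $+1$, $1$ for $-1$. The outcome code $\mathcal O(\mathcal C)\subseteq\mathbb Z_2^m$ is the set of outcome bit-strings occurring with nonzero probability for some input state; $\perp$ refers to $(u|v)=\sum u_iv_i\bmod 2$. $\overline{\mathcal P}_N$ is the $N$-qubit Pauli group modulo phases; $[P,Q]\in\mathbb Z_2$ is $0$ iff $P,Q$ commute. $U_\ell$ is the product of unitary gates of level $\ell$ (identity if none). Fault operators $F\in\overline{\mathcal P}_{n(\Delta+1)}$ act on qubits $(\ell+0.5,q)$, $0\le\ell\le\Delta$, $1\le q\le n$, with level components $F_{\ell+0.5}$; $\eta_{\ell+0.5}(P)$ is $P$ at level $\ell+0.5$ and $I$ elsewhere. Back-cumulant $\overleftarrow F$: start with $F$; for $\ell=\Delta,\dots,1$ replace $\overleftarrow F_{\ell-0.5}$ by $\overleftarrow F_{\ell-0.5}\cdot U_\ell^{-1}\overleftarrow F_{\ell+0.5}U_\ell$. $F(u)=\prod_j\eta_{\ell_j-0.5}(S_j^{u_j})$.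 *)

(* Defs.v *)
From HB Require Import structures.
From mathcomp Require Import all_boot all_order all_algebra algC.
Set Implicit Arguments. Unset Strict Implicit. Unset Printing Implicit Defensive.
Import Order.TTheory GRing.Theory Num.Theory.
Local Open Scope ring_scope.

Section Clifford.
Variable n : nat.

(** Operators on n qubits: 2^n x 2^n complex matrices; basis index i encodes
    the bit string with bit q equal to odd (i %/ 2^q). *)
Definition op_mx := 'M[algC]_(2 ^ n).
Definition bit (i : 'I_(2 ^ n)) (q : 'I_n) : bool := odd (i %/ 2 ^ q).

(** n-qubit Pauli modulo phases: X-part and Z-part. *)
Definition pauli : finType := ({ffun 'I_n -> bool} * {ffun 'I_n -> bool})%type.
Definition pauli_id : pauli := ([ffun => false], [ffun => false]).
Definition pauli_mul (p p' : pauli) : pauli :=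
  ([ffun q => p.1 q (+) p'.1 q], [ffun q => p.2 q (+) p'.2 q]).
(** [P,Q] : false iff P and Q commute. *)
Definition pauli_comm (p p' : pauli) : bool :=
  \big[addb/false]_(q < n) ((p.1 q && p'.2 q) (+) (p.2 q && p'.1 q)).
Definition pauli_supp (p : pauli) : {set 'I_n} := [set q | p.1 q || p.2 q].

(** The matrix X^x Z^z. *)
Definition pauli_mx (p : pauli) : op_mx :=
  \matrix_(i, j) (([forall q, bit i q == (bit j q (+) p.1 q)])%:R *
                  (-1) ^+ (\sum_(q < n) (p.2 q && bit j q))).
Definition herm_pauli_mx (s : bool) (p : pauli) : op_mx :=
  ((-1) ^+ s * 'i ^+ (\sum_(q < n) (p.1 q && p.2 q))) *: pauli_mx p.

Definition adj (U : op_mx) : op_mx := (map_mx Num.conj U)^T.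
Definition unitary (U : op_mx) : Prop := U *m adj U = 1%:M.
Definition clifford (U : op_mx) : Prop :=
  forall p : pauli, exists (c : algC) (p' : pauli),
    U *m pauli_mx p *m adj U = c *: pauli_mx p'.
(** U acts as U_A (x) I outside the qubit set A (entrywise unfolding). *)
Definition acts_within (A : {set 'I_n}) (U : op_mx) : Prop :=
  (forall i j, (exists2 q, q \notin A & bit i q != bit j q) -> U i j = 0) /\
  (forall i j i' j',
      (forall q, q \in A -> bit i q = bit i' q) ->
      (forall q, q \in A -> bit j q = bit j' q) ->
      (forall q, q \notin A -> bit i q = bit j q) ->
      (forall q, q \notin A -> bit i' q = bit j' q) ->
      U i j = U i' j').

(** Operations of a circuit: a unitary gate or a measurement of a Hermitian
    Pauli (sign bit, Pauli mod phase); each with a level and a declared support. *)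
Inductive kind := Gate of op_mx | Meas of bool & pauli.
Record operation := Op { lvl : nat; supp : {set 'I_n}; knd : kind }.
Definition circuit := seq operation.

Definition op_ok (o : operation) : Prop :=
  (1 <= lvl o)%N /\
  match knd o with
  | Gate U => unitary U /\ clifford U /\ acts_within (supp o) U
  | Meas _ p => pauli_supp p \subset supp o
  end.

Definition well_formed (C : circuit) : Prop :=
  (forall i, (i < size C)%N -> op_ok (nth (Op 0 set0 (Gate 1%:M)) C i)) /\
  (forall i j, (i < j < size C)%N ->
     let oi := nth (Op 0 set0 (Gate 1%:M)) C i in
     let oj := nth (Op 0 set0 (Gate 1%:M)) C j in
     (lvl oi <= lvl oj)%N /\ (lvl oi = lvl oj -> [disjoint supp oi & supp oj])).

Definition depth (C : circuit) : nat := \max_(o <- C) lvl o.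

Definition meas (C : circuit) : seq (nat * bool * pauli) :=
  pmap (fun o => if knd o is Meas s p then Some (lvl o, s, p) else None) C.
Definition nmeas (C : circuit) : nat := size (meas C).

(** Kraus operator of the circuit for outcome string o (o_j = 0 for +1). *)
Fixpoint kraus (C : circuit) (o : seq bool) (K : op_mx) : op_mx :=
  match C with
  | [::] => K
  | op :: C' =>
    match knd op with
    | Gate U => kraus C' o (U *m K)
    | Meas s p =>
        let b := head false o in
        kraus C' (behead o)
          ((2%:R)^-1 *: (1%:M + (-1) ^+ b *: herm_pauli_mx s p) *m K)
    end
  end.

Definition sqnorm (v : 'cV[algC]_(2 ^ n)) : algC :=
  ((map_mx Num.conj v)^T *m v) 0 0.

Definition in_outcome_code (C : circuit) (o : seq bool) : Prop :=
  size o = nmeas C /\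
  exists psi : 'cV[algC]_(2 ^ n),
    sqnorm psi = 1 /\ sqnorm (kraus C o 1%:M *m psi) != 0.

Definition xorseq (o o' : seq bool) : seq bool := [seq x.1 (+) x.2 | x <- zip o o'].

Definition linear_outcome_code (C : circuit) : Prop :=
  in_outcome_code C (nseq (nmeas C) false) /\
  forall o o', in_outcome_code C o -> in_outcome_code C o' ->
               in_outcome_code C (xorseq o o').

Definition dotb (m : nat) (u o : seq bool) : bool :=
  \big[addb/false]_(j < m) (nth false u j && nth false o j).

Definition in_outcome_perp (C : circuit) (u : seq bool) : Prop :=
  size u = nmeas C /\
  forall o, in_outcome_code C o -> dotb (nmeas C) u o = false.

(** Fault operators: component at level k + 0.5 is (F k), k = 0..depth. *)
Definition fault := nat -> pauli.

Definition fault_comm (D : nat) (F G : fault) : bool :=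
  \big[addb/false]_(k < D.+1) pauli_comm (F k) (G k).

(** F(u) = prod_j eta_{l_j - 0.5}(S_j^{u_j}). *)
Definition F_of (C : circuit) (u : seq bool) : fault := fun k =>
  foldr pauli_mul pauli_id
    [seq (nth (0%N, false, pauli_id) (meas C) j).2
    | j <- iota 0 (nmeas C)
    & nth false u j && ((nth (0%N, false, pauli_id) (meas C) j).1.1 - 1 == k)%N].

Definition U_level (C : circuit) (l : nat) : op_mx :=
  foldl (fun acc o => if knd o is Gate U then
                        (if lvl o == l then U *m acc else acc) else acc) 1%:M C.

(** U^{-1} P U modulo phases. *)
Definition conjP (U : op_mx) (p : pauli) : pauli :=
  if [pick p' | is_scalar_mx (invmx U *m pauli_mx p *m U *m invmx (pauli_mx p'))]
  is Some p' then p' else p.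

(** Back-cumulant: G_D = F_D, G_{l-1} = F_{l-1} * U_l^{-1} G_l U_l. *)
Fixpoint bc_aux (C : circuit) (F : fault) (i : nat) : pauli :=
  match i with
  | 0 => F (depth C)
  | i'.+1 => pauli_mul (F (depth C - i)%N)
                       (conjP (U_level C (depth C - i')) (bc_aux C F i'))
  end.

Definition back_cumulant (C : circuit) (F : fault) : fault := fun k =>
  if (k <= depth C)%N then bc_aux C F (depth C - k) else F k.

End Clifford.

(* Main.v *)
Require Import Defs.
From mathcomp Require Import all_boot all_order all_algebra algC.
From mathcomp Require Import zify.
Set Implicit Arguments. Unset Strict Implicit. Unset Printing Implicit Defensive.
Import Order.TTheory GRing.Theory Num.Theory.


Fixpoint nob (m : nat) (f : nat -> bool) : nat :=
  if m is m'.+1 then (f 0%N + 2 * nob m' (fun q => f q.+1))%N else 0%N.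

Lemma nob_lt m f : (nob m f < 2 ^ m)%N.
Proof.
elim: m f => [|m IH] f //=. have := IH (fun q => f q.+1). rewrite expnS.
case: (f 0%N) => /=; lia.
Qed.

Lemma half_eq (b : bool) x : ((b + 2 * x) %/ 2 = x)%N.
Proof. case: b => /=; lia. Qed.

Lemma nob_bit m f q : (q < m)%N -> odd (nob m f %/ 2 ^ q) = f q.
Proof.
elim: m f q => [|m IH] f q //= Hq.
case: q Hq => [|q] Hq.
  by rewrite expn0 divn1 oddD oddM /=; case: (f 0%N).
by rewrite expnS divnMA half_eq IH.
Qed.

Lemma bits_inj m a b : (a < 2 ^ m)%N -> (b < 2 ^ m)%N ->
  (forall q, (q < m)%N -> odd (a %/ 2 ^ q) = odd (b %/ 2 ^ q)) -> a = b.
Proof.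
elim: m a b => [|m IH] a b Ha Hb H; first by move: Ha Hb; rewrite expn0; lia.
have H0 := H 0%N erefl. rewrite expn0 !divn1 in H0.
have E : (a %/ 2 = b %/ 2)%N.
  apply: IH.
  - move: Ha; rewrite expnS; lia.
  - move: Hb; rewrite expnS; lia.
  by move=> q Hq; rewrite -!divnMA -expnS; apply: H.
by rewrite (divn_eq a 2) (divn_eq b 2) !modn2 E H0.
Qed.

Definition ext n (f : 'I_n -> bool) (q : nat) : bool :=
  if insub q is Some i then f i else false.

Definition idx n (f : 'I_n -> bool) : 'I_(2 ^ n) := Ordinal (nob_lt n (ext f)).

Lemma bit_idx n (f : 'I_n -> bool) q : bit (idx f) q = f q.
Proof. by rewrite /bit /= nob_bit // /ext valK. Qed.

Lemma bit_inj n (i j : 'I_(2 ^ n)) : (forall q, bit i q = bit j q) -> i = j.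
Proof.
move=> H; apply: val_inj; apply: (@bits_inj n); [exact: ltn_ord|exact: ltn_ord|].
move=> q Hq; exact: (H (Ordinal Hq)).
Qed.

Local Open Scope ring_scope.


Definition zdot n (z : {ffun 'I_n -> bool}) (j : 'I_(2 ^ n)) : bool :=
  \big[addb/false]_(q < n) (z q && bit j q).

Lemma sum_odd n (F : 'I_n -> bool) : odd (\sum_(q < n) F q) = \big[addb/false]_(q < n) F q.
Proof. by rewrite (big_morph odd oddD (erefl : odd 0 = false)); apply: eq_bigr => q _; case: (F q). Qed.

Lemma pauli_mxE n (p : pauli n) i j : pauli_mx p i j =
  if [forall q, bit i q == bit j q (+) p.1 q] then (-1) ^+ zdot p.2 j else 0.
Proof.
rewrite mxE -signr_odd sum_odd /zdot.
by case: ifP => _; rewrite ?mul1r ?mul0r.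
Qed.

Definition flip n (x : {ffun 'I_n -> bool}) (j : 'I_(2 ^ n)) : 'I_(2 ^ n) :=
  idx (fun q => bit j q (+) x q).

Lemma bit_flip n (x : {ffun 'I_n -> bool}) (j : 'I_(2 ^ n)) q : bit (flip x j) q = bit j q (+) x q.
Proof. by rewrite bit_idx. Qed.

Lemma flip_eq n (x : {ffun 'I_n -> bool}) (i j : 'I_(2 ^ n)) :
  [forall q, bit i q == bit j q (+) x q] = (i == flip x j).
Proof.
apply/forallP/eqP => [H|->] => [|q]; last by rewrite bit_flip.
by apply: bit_inj => q; rewrite bit_flip; apply/eqP.
Qed.

Lemma big_addb_split I (r : seq I) (F G : I -> bool) :
  \big[addb/false]_(i <- r) (F i (+) G i) =
  \big[addb/false]_(i <- r) F i (+) \big[addb/false]_(i <- r) G i.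
Proof. by rewrite big_split. Qed.

Definition sym n (p q : pauli n) : bool := \big[addb/false]_(r < n) (p.2 r && q.1 r).

Lemma zdot_flip n (z x : {ffun 'I_n -> bool}) (j : 'I_(2 ^ n)) :
  zdot z (flip x j) = zdot z j (+) \big[addb/false]_(r < n) (z r && x r).
Proof.
rewrite /zdot -big_addb_split; apply: eq_bigr => r _.
by rewrite bit_flip; case: (z r).
Qed.

Lemma zdotD n (z1 z2 : {ffun 'I_n -> bool}) j :
  zdot [ffun r => z1 r (+) z2 r] j = zdot z1 j (+) zdot z2 j.
Proof.
rewrite /zdot -big_addb_split; apply: eq_bigr => r _.
by rewrite ffunE; case: (z1 r); case: (z2 r); case: (bit j r).
Qed.

Lemma pauli_mxM n (p q : pauli n) :
  pauli_mx p *m pauli_mx q = (-1) ^+ sym p q *: pauli_mx (pauli_mul p q).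
Proof.
apply/matrixP => i j; rewrite [RHS]mxE pauli_mxE mxE (bigD1 (flip q.1 j)) //= big1 ?addr0; last first.
  by move=> l Hl; rewrite (pauli_mxE q) flip_eq (negbTE Hl) mulr0.
rewrite !pauli_mxE [in X in _ * X]flip_eq eqxx /=.
have -> : [forall q0, bit i q0 == bit (flip q.1 j) q0 (+) p.1 q0] =
          [forall q0, bit i q0 == bit j q0 (+) p.1 q0 (+) q.1 q0].
  by apply: eq_forallb => r; rewrite bit_flip -addbA (addbC (q.1 r)) addbA.
have -> : [forall q0, bit i q0 == bit j q0 (+) (pauli_mul p q).1 q0] =
          [forall q0, bit i q0 == bit j q0 (+) p.1 q0 (+) q.1 q0].
  by apply: eq_forallb => r; rewrite /pauli_mul /= ffunE addbA.
case: ifP => _ /=; last by rewrite !mul0r mulr0.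
rewrite /pauli_mul /= zdotD zdot_flip -!signr_addb /sym.
by rewrite [in RHS]addbC -addbA (addbC _ (zdot q.2 j)) addbA.
Qed.



Lemma pauli_mulC n (p q : pauli n) : pauli_mul p q = pauli_mul q p.
Proof. by congr pair; apply/ffunP => r; rewrite !ffunE addbC. Qed.

Lemma pauli_comm_sym n (p q : pauli n) : pauli_comm p q = sym p q (+) sym q p.
Proof.
rewrite /pauli_comm /sym -big_addb_split; apply: eq_bigr => r _.
by case: (p.1 r); case: (q.2 r); case: (p.2 r); case: (q.1 r).
Qed.

Lemma pauli_mx_comm n (p q : pauli n) :
  pauli_mx p *m pauli_mx q = (-1) ^+ pauli_comm p q *: (pauli_mx q *m pauli_mx p).
Proof.
rewrite !pauli_mxM scalerA pauli_mulC pauli_comm_sym signr_addb -mulrA.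
by rewrite -signr_addb addbb mulr1.
Qed.

Lemma pauli_mx_id n : pauli_mx (pauli_id n) = 1%:M.
Proof.
apply/matrixP => i j; rewrite pauli_mxE !mxE.
have -> : zdot (pauli_id n).2 j = false.
  by rewrite /zdot big1 // => r _; rewrite ffunE.
have -> : [forall q, bit i q == bit j q (+) (pauli_id n).1 q] = (i == j).
  apply/forallP/eqP => [H|->] => [|q]; last by rewrite ffunE addbF.
  by apply: bit_inj => q; have := H q; rewrite ffunE addbF => /eqP.
by case: (i == j).
Qed.

Lemma pauli_mulK n (p : pauli n) : pauli_mul p p = pauli_id n.
Proof. by congr pair; apply/ffunP => r; rewrite !ffunE addbb. Qed.

Lemma pauli_sq n (p : pauli n) : pauli_mx p *m pauli_mx p = (-1) ^+ sym p p *: 1%:M.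
Proof. by rewrite pauli_mxM pauli_mulK pauli_mx_id. Qed.

Lemma sign_sq (b : bool) : ((-1) ^+ b * (-1) ^+ b = 1 :> algC).
Proof. by rewrite -signr_addb addbb. Qed.

Lemma pauli_unit n (p : pauli n) : pauli_mx p \in unitmx.
Proof.
have H : pauli_mx p *m ((-1) ^+ sym p p *: pauli_mx p) = 1%:M.
  by rewrite -scalemxAr pauli_sq scalerA sign_sq scale1r.
by case: (mulmx1_unit H).
Qed.

Lemma herm_sq n s (p : pauli n) : herm_pauli_mx s p *m herm_pauli_mx s p = 1%:M.
Proof.
rewrite /herm_pauli_mx -scalemxAl -scalemxAr pauli_sq !scalerA.
rewrite mulrACA sign_sq mul1r -exprMn_comm; last exact: mulrC.
rewrite -expr2 sqrCi -[X in X * _]signr_odd sum_odd.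
have -> : \big[addb/false]_(q < n) (p.1 q && p.2 q) = sym p p.
  by apply: eq_bigr => r _; rewrite andbC.
by rewrite sign_sq scale1r.
Qed.

Lemma sign_inj (a b : bool) : (-1) ^+ a = (-1) ^+ b :> algC -> a = b.
Proof.
have H : (-1 : algC) != 1.
  apply/eqP => E; have := @ltrN10 algC; rewrite E ltr10 //.
case: a; case: b => //= E; rewrite ?expr1 ?expr0 in E.
  by rewrite E eqxx in H.
by rewrite -E eqxx in H.
Qed.

Lemma zdot_single n (z : {ffun 'I_n -> bool}) r : zdot z (idx (fun t => t == r)) = z r.
Proof.
rewrite /zdot (bigD1 r) //= big1 ?addbF; first by rewrite bit_idx eqxx andbT.
by move=> t /negbTE Ht; rewrite bit_idx Ht andbF.
Qed.

Lemma scale_entry n (c : algC) (M : op_mx n) i j : (c *: M) i j = c * M i j.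
Proof. by rewrite mxE. Qed.

Lemma pauli_inj n (p q : pauli n) (c : algC) : pauli_mx p = c *: pauli_mx q -> p = q.
Proof.
move=> E.
have zero : zdot p.2 (idx (fun _ => false)) = false.
  by rewrite /zdot big1 // => r _; rewrite bit_idx andbF.
move/matrixP: (E) => /(_ (idx (fun r => p.1 r)) (idx (fun _ => false))).
rewrite scale_entry !pauli_mxE zero.
have -> : [forall q0, bit (idx (fun r => p.1 r)) q0 ==
                      bit (idx (fun=> false)) q0 (+) p.1 q0].
  by apply/forallP => r; rewrite !bit_idx.
case: ifP => [/forallP H1|]; last by rewrite mulr0 => _ /eqP; rewrite oner_eq0.
rewrite /zdot big1 /=; last by move=> r _; rewrite bit_idx andbF.
rewrite expr0 mulr1 => c1.
have E1 : p.1 = q.1.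
  by apply/ffunP => r; have := H1 r; rewrite !bit_idx /= => /eqP.
case: p q E E1 {zero H1} => [x1 z1] [x2 z2] /= E E1; subst x2; congr pair.
apply/ffunP => r.
move/matrixP: (E) => /(_ (flip x1 (idx (fun t => t == r))) (idx (fun t => t == r))).
rewrite scale_entry !pauli_mxE !flip_eq eqxx -c1 mul1r !zdot_single.
exact: sign_inj.
Qed.



Lemma adjM n (A B : op_mx n) : adj (A *m B) = adj B *m adj A.
Proof. by rewrite /adj map_mxM trmx_mul. Qed.

Lemma adj1 n : adj (1%:M : op_mx n) = 1%:M.
Proof. by rewrite /adj map_mx1 trmx1. Qed.


Lemma unitary_unit n (U : op_mx n) : unitary U -> U \in unitmx.
Proof. by move=> H; case: (mulmx1_unit H). Qed.

Lemma unitary_inv n (U : op_mx n) : unitary U -> invmx U = adj U.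
Proof.
move=> H; rewrite -[invmx U]mulmx1 -H mulmxA mulVmx ?mul1mx //.
exact: unitary_unit.
Qed.

Lemma unitary_adjK n (U : op_mx n) : unitary U -> adj U *m U = 1%:M.
Proof. by move=> H; apply: mulmx1C. Qed.

Definition clif n (U : op_mx n) := unitary U /\ clifford U.

Lemma clif1 n : clif (1%:M : op_mx n).
Proof.
split; first by rewrite /unitary adj1 mul1mx.
by move=> p; exists 1, p; rewrite adj1 mul1mx mulmx1 scale1r.
Qed.

Lemma clifM n (A B : op_mx n) : clif A -> clif B -> clif (A *m B).
Proof.
move=> [uA cA] [uB cB]; split.
  by rewrite /unitary adjM mulmxA -(mulmxA A) uB mulmx1 uA.
move=> p; have [c [p' E]] := cB p; have [d [p'' E']] := cA p'.
exists (c * d), p''; rewrite adjM.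
have -> : A *m B *m pauli_mx p *m (adj B *m adj A) = A *m (B *m pauli_mx p *m adj B) *m adj A.
  by rewrite !mulmxA.
by rewrite E -scalemxAr -scalemxAl E' scalerA.
Qed.

Lemma pauli_neq0 n (p : pauli n) : pauli_mx p != 0.
Proof.
apply/eqP => E; have := pauli_sq p; rewrite E mul0mx => /matrixP.
move=> /(_ (idx (fun _ => false)) (idx (fun _ => false))).
rewrite !mxE eqxx /= mulr1 => /eqP; rewrite eq_sym signr_eq0 //.
Qed.

Definition pickp n (X : op_mx n) (p0 : pauli n) : pauli n :=
  if [pick p' | is_scalar_mx (X *m invmx (pauli_mx p'))] is Some p' then p' else p0.

Lemma pick_spec n (X : op_mx n) p0 :
  (exists c p', X = c *: pauli_mx p') -> exists c, X = c *: pauli_mx (pickp X p0).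
Proof.
move=> [c [p' E]]; rewrite /pickp; case: pickP => [p'' /is_scalar_mxP [a Ha]|Hn].
  exists a; rewrite -mul_scalar_mx -Ha -mulmxA mulVmx ?mulmx1 //.
  exact: pauli_unit.
have := Hn p'; rewrite E -scalemxAl mulmxV ?pauli_unit // scalemx1.
by rewrite scalar_mx_is_scalar.
Qed.

Lemma clif_inv n (U : op_mx n) q :
  clif U -> exists c p, adj U *m pauli_mx q *m U = c *: pauli_mx p.
Proof.
move=> [uU cU].
pose f p := pickp (U *m pauli_mx p *m adj U) p.
have Hf p : exists d, U *m pauli_mx p *m adj U = d *: pauli_mx (f p).
  by apply: pick_spec; apply: cU.
have back p d r : U *m pauli_mx p *m adj U = d *: pauli_mx r ->
    pauli_mx p = d *: (adj U *m pauli_mx r *m U).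
  move=> E; rewrite scalemxAl scalemxAr -E.
  rewrite !mulmxA (unitary_adjK uU) mul1mx -!mulmxA (unitary_adjK uU) mulmx1 //.
have nz p d r : U *m pauli_mx p *m adj U = d *: pauli_mx r -> d != 0.
  move=> E; apply/eqP => d0; have := back _ _ _ E; rewrite d0 scale0r => E0.
  by have := pauli_neq0 p; rewrite E0 eqxx.
have finj : injective f.
  move=> p1 p2 E12; have [d1 E1] := Hf p1; have [d2 E2] := Hf p2.
  rewrite E12 in E1.
  have B1 := back _ _ _ E1; have B2 := back _ _ _ E2.
  apply: (@pauli_inj _ _ _ (d1 / d2)); rewrite B1 B2 scalerA mulfVK //.
  exact: nz E2.
have [g _ fgK] := injF_bij finj.
have [d E] := Hf (g q); rewrite fgK in E.
exists d^-1, (g q); rewrite (back _ _ _ E) scalerA mulVf ?scale1r //.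
exact: nz E.
Qed.

Lemma conjP_spec n (U : op_mx n) p :
  clif U -> exists c, invmx U *m pauli_mx p *m U = c *: pauli_mx (conjP U p).
Proof.
move=> cU; have := @pick_spec _ (invmx U *m pauli_mx p *m U) p.
rewrite /conjP /pickp; apply.
by rewrite (unitary_inv cU.1); apply: clif_inv.
Qed.



Lemma flip_eq' n (x : {ffun 'I_n -> bool}) (i l : 'I_(2 ^ n)) :
  [forall q, bit i q == bit l q (+) x q] = (l == flip x i).
Proof.
rewrite flip_eq; apply/eqP/eqP => ->; apply: bit_inj => q; rewrite !bit_flip //.
by rewrite -addbA addbb addbF.
by rewrite -addbA addbb addbF.
Qed.

Lemma addb_eq2 (a b c : bool) : (a (+) c == b (+) c) = (a == b).
Proof. by case: a; case: b; case: c. Qed.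

Lemma gate_comm n (A : {set 'I_n}) (U : op_mx n) (p : pauli n) :
  acts_within A U -> [disjoint pauli_supp p & A] ->
  U *m pauli_mx p = pauli_mx p *m U.
Proof.
move=> [H1 H2] Hd.
have inA q : q \in A -> p.1 q = false /\ p.2 q = false.
  move=> qA; have := disjointFl Hd qA; rewrite /pauli_supp inE.
  by case: (p.1 q); case: (p.2 q).
apply/matrixP => i j; rewrite !mxE.
rewrite (bigD1 (flip p.1 j)) //= big1 ?addr0; last first.
  by move=> l Hl; rewrite (pauli_mxE p) flip_eq (negbTE Hl) mulr0.
rewrite [RHS](bigD1 (flip p.1 i)) //= [X in _ = _ + X]big1 ?addr0; last first.
  by move=> l Hl; rewrite (pauli_mxE p) flip_eq' (negbTE Hl) mul0r.
rewrite !pauli_mxE flip_eq eqxx flip_eq' eqxx.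
have fj q : bit j q = bit (flip p.1 j) q (+) p.1 q.
  by rewrite bit_flip -addbA addbb addbF.
case: (boolP [exists q, (q \notin A) && (bit i q != bit (flip p.1 j) q)]).
  move=> /existsP [q /andP [qA Hq]].
  rewrite H1; last by exists q.
  rewrite H1 ?mulr0 ?mul0r //; exists q => //.
  by rewrite bit_flip fj addb_eq2.
rewrite negb_exists => /forallP Hall.
have out q : q \notin A -> bit i q = bit (flip p.1 j) q.
  by move=> qA; have := Hall q; rewrite qA /= negbK => /eqP.
have out2 q : q \notin A -> bit (flip p.1 i) q = bit j q.
  by move=> qA; rewrite bit_flip fj out.
have -> : zdot p.2 (flip p.1 i) = zdot p.2 j.
  apply: eq_bigr => q _; case: (boolP (q \in A)) => qA.
    by rewrite (inA q qA).2.
  by rewrite out2.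
rewrite mulrC; congr (_ * _); apply: H2.
- by move=> q qA; rewrite bit_flip (inA q qA).1 addbF.
- by move=> q qA; rewrite bit_flip (inA q qA).1 addbF.
- exact: out.
- exact: out2.
Qed.



Fixpoint ann {n} (C : circuit n) (u : seq bool) : seq (operation n * bool) :=
  match C with
  | [::] => [::]
  | o :: C' => match knd o with
               | Gate _ => (o, false) :: ann C' u
               | Meas _ _ => (o, head false u) :: ann C' (behead u)
               end
  end.

Lemma map_fst_ann {n} (C : circuit n) u : map fst (ann C u) = C.
Proof. by elim: C u => [|o C IH] u //=; case: (knd o) => * /=; rewrite IH. Qed.

Definition opm {n} (x : operation n * bool) : op_mx n :=
  match knd x.1 with Gate U => U | Meas s p => if x.2 then herm_pauli_mx s p else 1%:M end.
Definition gm {n} (o : operation n) : op_mx n :=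
  match knd o with Gate U => U | _ => 1%:M end.
Definition hm {n} (x : operation n * bool) : op_mx n :=
  match knd x.1 with Gate _ => 1%:M | Meas s p => if x.2 then herm_pauli_mx s p else 1%:M end.

Definition Wa {n} (A : seq (operation n * bool)) : op_mx n :=
  foldr (fun x acc => acc *m opm x) 1%:M A.
Definition Vo {n} (L : seq (operation n)) : op_mx n :=
  foldr (fun o acc => acc *m gm o) 1%:M L.
Definition Ha {n} (A : seq (operation n * bool)) : op_mx n :=
  foldr (fun x acc => acc *m hm x) 1%:M A.

Definition PFa {n} (A : seq (operation n * bool)) (k : nat) : pauli n :=
  foldr (fun x acc => match knd x.1 with
                      | Meas _ p => if x.2 && (lvl x.1 - 1 == k)%N then pauli_mul p acc else acc
                      | _ => acc end) (pauli_id n) A.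

Fixpoint dota {n} (A : seq (operation n * bool)) (o : seq bool) : bool :=
  match A with
  | [::] => false
  | x :: A' => match knd x.1 with
               | Gate _ => dota A' o
               | Meas _ _ => (x.2 && head false o) (+) dota A' (behead o)
               end
  end.

Lemma dota_cons {n} (x : operation n * bool) A o : dota (x :: A) o =
  match knd x.1 with
  | Gate _ => dota A o
  | Meas _ _ => (x.2 && head false o) (+) dota A (behead o)
  end.
Proof. by []. Qed.

Lemma ann_cons {n} (o : operation n) C u : ann (o :: C) u =
  match knd o with
  | Gate _ => (o, false) :: ann C u
  | Meas _ _ => (o, head false u) :: ann C (behead u)
  end.
Proof. by []. Qed.

Lemma Wa_cat {n} (A B : seq (operation n * bool)) : Wa (A ++ B) = Wa B *m Wa A.
Proof. by elim: A => [|x A IH] /=; rewrite ?mulmx1 // /Wa /= -/(Wa _) IH mulmxA. Qed.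

Lemma Vo_cat {n} (A B : seq (operation n)) : Vo (A ++ B) = Vo B *m Vo A.
Proof. by elim: A => [|x A IH] /=; rewrite ?mulmx1 // /Vo /= -/(Vo _) IH mulmxA. Qed.

Lemma nmeas_cons {n} (o : operation n) C :
  nmeas (o :: C) = ((if knd o is Meas _ _ then 1 else 0) + nmeas C)%N.
Proof. by rewrite /nmeas /meas /=; case: (knd o). Qed.

Lemma nmeas_cat {n} (C1 C2 : circuit n) : nmeas (C1 ++ C2) = (nmeas C1 + nmeas C2)%N.
Proof. by rewrite /nmeas /meas pmap_cat size_cat. Qed.

Lemma kraus_cat {n} (C1 C2 : circuit n) o1 o2 K : size o1 = nmeas C1 ->
  kraus (C1 ++ C2) (o1 ++ o2) K = kraus C2 o2 (kraus C1 o1 K).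
Proof.
elim: C1 o1 K => [|o C1 IH] o1 K /=; first by case: o1.
rewrite nmeas_cons; case: (knd o) => [U|s p] /= Hs; first exact: IH.
case: o1 Hs => [|b o1] //=; rewrite add1n => -[Hs]; exact: IH.
Qed.

Lemma kraus0 {n} (C : circuit n) o : kraus C o 0 = 0.
Proof.
elim: C o => [|x C IH] o //=; case: (knd x) => *; by rewrite mulmx0 IH.
Qed.

Lemma dotb_ann {n} (C : circuit n) u o : dotb (nmeas C) u o = dota (ann C u) o.
Proof.
elim: C u o => [|x C IH] u o; first by rewrite /dotb /nmeas /= big_ord0.
rewrite nmeas_cons ann_cons; case E: (knd x) => [U|s p]; rewrite dota_cons /= E ?add0n ?add1n; first exact: IH.
rewrite /dotb big_ord_recl -IH /dotb; congr addb.
by apply: eq_bigr => j _; rewrite !nth_behead.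
Qed.

Lemma dota_cat_zero {n} (A B : seq (operation n * bool)) o :
  dota (A ++ B) (nseq (nmeas (map fst A)) false ++ o) = dota B o.
Proof.
elim: A => [|x A IH] //; rewrite cat_cons map_cons nmeas_cons dota_cons.
by case: (knd x.1) => *; rewrite ?add0n ?add1n /= ?andbF IH.
Qed.

Lemma U_level_gen {n} (C : circuit n) l (acc : op_mx n) :
  foldl (fun acc o => if knd o is Gate U then
                        (if lvl o == l then U *m acc else acc) else acc) acc C
  = Vo (filter (fun o => lvl o == l) C) *m acc.
Proof.
elim: C acc => [|o C IH] acc /=; first by rewrite mul1mx.
rewrite IH; case: eqP => _ /=; rewrite /Vo /= -/(Vo _) /gm;
  case: (knd o) => [U|s p]; by rewrite ?mulmx1 ?mulmxA.
Qed.

Lemma U_level_Vo {n} (C : circuit n) l :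
  U_level C l = Vo (filter (fun o => lvl o == l) C).
Proof. by rewrite /U_level U_level_gen mulmx1. Qed.



Definition Pr {n} (s : bool) (p : pauli n) (b : bool) : op_mx n :=
  (2%:R)^-1 *: (1%:M + (-1) ^+ b *: herm_pauli_mx s p).

Lemma Pr_sum {n} s (p : pauli n) : Pr s p false + Pr s p true = 1%:M.
Proof.
rewrite /Pr -scalerDr expr0 expr1 scale1r scaleN1r addrACA subrr addr0.
rewrite -{1 2}(scale1r (1%:M : op_mx n)) -scalerDl scalerA mulVf ?scale1r //.
by rewrite pnatr_eq0.
Qed.

Lemma herm_Pr {n} s (p : pauli n) b :
  herm_pauli_mx s p *m Pr s p b = (-1) ^+ b *: Pr s p b.
Proof.
rewrite /Pr -scalemxAr mulmxDr mulmx1 -scalemxAr herm_sq.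
rewrite [RHS]scalerA mulrC -scalerA; congr (_ *: _).
by rewrite scalerDr scalerA sign_sq scale1r addrC.

Qed.

Lemma kraus_cons {n} (o : operation n) C out K : kraus (o :: C) out K =
  match knd o with
  | Gate U => kraus C out (U *m K)
  | Meas s p => kraus C (behead out) (Pr s p (head false out) *m K)
  end.
Proof. by []. Qed.

Lemma kraus_parity {n} (A : seq (operation n * bool)) (K : op_mx n) (c : bool) :
  (forall o, size o = nmeas (map fst A) -> kraus (map fst A) o K != 0 -> dota A o = c) ->
  Wa A *m K = (-1) ^+ c *: (Vo (map fst A) *m K).
Proof.
elim: A K c => [|x A IH] K c H0.
  case: (eqVneq K 0) => [->|nz]; first by rewrite !mulmx0 scaler0.
  by have := H0 [::] erefl nz => /= <-; rewrite scale1r.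
rewrite /Wa /Vo /= -/(Wa _) -/(Vo _) /opm /gm.
case E: (knd x.1) => [U|s p].
  rewrite -!mulmxA; apply: IH => o Ho Hk.
  have := H0 o; rewrite map_cons nmeas_cons kraus_cons dota_cons E add0n.
  by apply.
have Hb b : Wa A *m ((if x.2 then herm_pauli_mx s p else 1%:M) *m (Pr s p b *m K)) =
            (-1) ^+ c *: (Vo (map fst A) *m (Pr s p b *m K)).
  have -> : (if x.2 then herm_pauli_mx s p else 1%:M) *m (Pr s p b *m K) =
            (-1) ^+ (x.2 && b) *: (Pr s p b *m K).
    by case: (x.2); rewrite /= ?mul1mx ?expr0 ?scale1r // mulmxA herm_Pr scalemxAl.
  rewrite -scalemxAr (IH _ (c (+) (x.2 && b))).
    by rewrite scalerA -signr_addb addbC -addbA addbb addbF.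
  move=> o Ho Hk; have := H0 (b :: o).
  rewrite map_cons nmeas_cons kraus_cons dota_cons E add1n /= => /(_ (congr1 S Ho) Hk).
  by move=> <-; case: (x.2 && b); case: (dota A o).
rewrite mulmx1.
transitivity (Wa A *m ((if x.2 then herm_pauli_mx s p else 1%:M) *m (Pr s p false *m K)) +
              Wa A *m ((if x.2 then herm_pauli_mx s p else 1%:M) *m (Pr s p true *m K))).
  by rewrite -!mulmxDr -mulmxDl Pr_sum mul1mx mulmxA.
by rewrite !Hb -scalerDr -mulmxDr -mulmxDl Pr_sum mul1mx.
Qed.



Definition FF {n} (s : seq (nat * bool * pauli n)) (u : seq bool) (k : nat) : pauli n :=
  foldr (@pauli_mul n) (pauli_id n)
    [seq (nth (0%N, false, pauli_id n) s j).2
    | j <- iota 0 (size s)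
    & nth false u j && ((nth (0%N, false, pauli_id n) s j).1.1 - 1 == k)%N].

Lemma FF_cons {n} (x : nat * bool * pauli n) s u k :
  FF (x :: s) u k = if head false u && (x.1.1 - 1 == k)%N
                    then pauli_mul x.2 (FF s (behead u) k) else FF s (behead u) k.
Proof.
rewrite /FF /=.
have -> : iota 1 (size s) = map S (iota 0 (size s)).
  exact: (iotaDl 1 0).
rewrite filter_map.
have -> : nth false u 0 = head false u by case: u.
set P := preim _ _.
have -> : filter P (iota 0 (size s)) = [seq j <- iota 0 (size s) | nth false (behead u) j &&
    (((nth (0%N, false, pauli_id n) s j).1.1 - 1)%N == k)].
  by apply: eq_filter => j; rewrite /P /= nth_behead.
by case: ifP => _ /=; rewrite -map_comp.
Qed.

Lemma meas_cons {n} (o : operation n) C : meas (o :: C) =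
  match knd o with Gate _ => meas C | Meas s p => (lvl o, s, p) :: meas C end.
Proof. by rewrite /meas /=; case: (knd o). Qed.

Lemma PFa_cons {n} (x : operation n * bool) A k : PFa (x :: A) k =
  match knd x.1 with
  | Meas _ p => if x.2 && (lvl x.1 - 1 == k)%N then pauli_mul p (PFa A k) else PFa A k
  | _ => PFa A k end.
Proof. by []. Qed.

Lemma F_of_ann {n} (C : circuit n) u k : F_of C u k = PFa (ann C u) k.
Proof.
rewrite /F_of -/(nmeas C) /nmeas -/(FF (meas C) u k).
elim: C u => [|o C IH] u; first by rewrite /FF.
rewrite meas_cons ann_cons; case E: (knd o) => [U|s p]; rewrite PFa_cons /= E //.
by rewrite FF_cons /= !IH.
Qed.



Lemma all_In {T} (a : pred T) s y : all a s -> List.In y s -> a y.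
Proof. by elim: s => [|x s IH] //= /andP [Hx Hs] [<-|Hy] //; apply: IH. Qed.

Lemma Vo_clif {n} (L : seq (operation n)) : (forall o, List.In o L -> op_ok o) -> clif (Vo L).
Proof.
elim: L => [|o L IH] H; first exact: clif1.
rewrite /Vo /= -/(Vo _); apply: clifM.
  by apply: IH => o' Ho'; apply: H; by right.
have := H o (or_introl erefl); rewrite /op_ok /gm; case: (knd o) => [U|s p].
  by move=> [_ [uU [cU _]]].
by move=> _; exact: clif1.
Qed.

Lemma herm_gate_comm {n} (S : {set 'I_n}) (U : op_mx n) s (p : pauli n) :
  acts_within S U -> [disjoint pauli_supp p & S] ->
  U *m herm_pauli_mx s p = herm_pauli_mx s p *m U.
Proof.
move=> H Hd; rewrite /herm_pauli_mx -scalemxAr -scalemxAl.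
by rewrite (gate_comm H Hd).
Qed.

Lemma Ha_comm {n} (S : {set 'I_n}) (U : op_mx n) (A : seq (operation n * bool)) :
  acts_within S U ->
  (forall y, List.In y A -> op_ok y.1 /\ [disjoint supp y.1 & S]) ->
  Ha A *m U = U *m Ha A.
Proof.
move=> HU; elim: A => [|y A IH] H; first by rewrite mul1mx mulmx1.
rewrite /Ha /= -/(Ha _).
have [ok dj] := H y (or_introl erefl).
rewrite -mulmxA.
have -> : hm y *m U = U *m hm y.
  rewrite /hm; move: ok; rewrite /op_ok; case: (knd y.1) => [V|s p] [_ Hs].
    by rewrite mul1mx mulmx1.
  case: (y.2); last by rewrite mul1mx mulmx1.
  symmetry; apply: herm_gate_comm HU _.
  exact: disjointWl Hs dj.
rewrite mulmxA IH ?mulmxA // => z Hz; apply: H; by right.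
Qed.

Lemma Wa_split {n} (A : seq (operation n * bool)) :
  (forall x, List.In x A -> op_ok x.1) ->
  pairwise (fun x y => [disjoint supp x.1 & supp y.1]) A ->
  Wa A = Vo (map fst A) *m Ha A.
Proof.
elim: A => [|x A IH] Hok Hpw; first by rewrite mulmx1.
move: Hpw; rewrite pairwise_cons => /andP [Hall Hpw].
have Hok' : forall y, List.In y A -> op_ok y.1.
  by move=> y Hy; apply: Hok; by right.
rewrite /Wa /Vo /Ha /= -/(Wa _) -/(Vo _) -/(Ha _) (IH Hok' Hpw).
have := Hok x (or_introl erefl); rewrite /opm /gm /hm /op_ok.
case: (knd x.1) => [U|s p] [_ Hx]; last by rewrite !mulmx1 mulmxA.
rewrite mulmx1 -!mulmxA; congr (_ *m _).
apply: (Ha_comm Hx.2.2) => y Hy; split; first exact: Hok'.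
by rewrite disjoint_sym; apply: (all_In Hall).
Qed.

Lemma Ha_pauli {n} (A : seq (operation n * bool)) k :
  (forall x, List.In x A -> (lvl x.1 - 1 == k)%N) ->
  exists d, Ha A = d *: pauli_mx (PFa A k).
Proof.
elim: A => [|x A IH] H; first by exists 1; rewrite scale1r pauli_mx_id.
have [d Hd] : exists d, Ha A = d *: pauli_mx (PFa A k).
  by apply: IH => y Hy; apply: H; by right.
have Hx := H x (or_introl erefl).
rewrite PFa_cons /Ha /= -/(Ha _) /hm Hd; case: (knd x.1) => [U|s p].
  by exists d; rewrite mulmx1.
rewrite Hx andbT; case: (x.2); last by exists d; rewrite mulmx1.
rewrite /herm_pauli_mx -scalemxAr -scalemxAl pauli_mxM scalerA scalerA pauli_mulC.
by eexists.
Qed.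

Lemma PFa_filter {n} (A : seq (operation n * bool)) k :
  (forall x, List.In x A -> (0 < lvl x.1)%N) ->
  PFa A k = PFa (filter (fun x => lvl x.1 == k.+1) A) k.
Proof.
elim: A => [|x A IH] H //.
rewrite [filter _ (x :: A)]/=.
have IH' : PFa A k = PFa (filter (fun x => lvl x.1 == k.+1) A) k.
  by apply: IH => y Hy; apply: H; by right.
have Hx := H x (or_introl erefl).
have E : (lvl x.1 - 1 == k)%N = (lvl x.1 == k.+1) by apply/eqP/eqP; lia.
case: ifP => Hl; rewrite !PFa_cons E Hl ?andbF IH' //.
by case: (knd x.1).
Qed.

Lemma filter_all {T} (f : T -> nat) (s : seq T) k :
  all (fun y => k < f y)%N s ->
  filter (fun x => f x <= k)%N s = [::] /\ filter (fun x => k < f x)%N s = s.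
Proof.
elim: s => [|y s IH] //= /andP [Hy Hs]; have [-> ->] := IH Hs.
by rewrite Hy leqNgt Hy.
Qed.

Lemma filter_split {T} (f : T -> nat) (s : seq T) k :
  pairwise (fun a b => f a <= f b)%N s ->
  filter (fun x => f x <= k)%N s ++ filter (fun x => k < f x)%N s = s.
Proof.
elim: s => [|x s IH] //; rewrite pairwise_cons => /andP [Hall Hpw] /=.
case: (leqP (f x) k) => Hx /=; first by rewrite IH.
have Hall' : all (fun y => k < f y)%N s.
  by apply: sub_all Hall => y /= Hxy; apply: leq_trans Hxy.
by have [-> ->] := filter_all Hall'.
Qed.



Definition basis_vec {n} (j : 'I_(2 ^ n)) : 'cV[algC]_(2 ^ n) := \col_l ((l == j)%:R).

Lemma mul_basis {n} (K : op_mx n) j l : (K *m basis_vec j) l 0 = K l j.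
Proof.
rewrite mxE (bigD1 j) //= big1 ?addr0; first by rewrite mxE eqxx mulr1.
by move=> m /negbTE Hm; rewrite mxE Hm mulr0.
Qed.

Lemma sqnormE {n} (v : 'cV[algC]_(2 ^ n)) : sqnorm v = \sum_l (v l 0)^* * v l 0.
Proof. by rewrite /sqnorm mxE; apply: eq_bigr => l _; rewrite !mxE. Qed.

Lemma sqnorm_basis {n} (j : 'I_(2 ^ n)) : sqnorm (basis_vec j) = 1.
Proof.
rewrite sqnormE (bigD1 j) //= big1 ?addr0; first by rewrite mxE eqxx conjC1 mulr1.
by move=> m /negbTE Hm; rewrite mxE Hm mulr0.
Qed.

Lemma nz_code {n} (C : circuit n) o :
  size o = nmeas C -> kraus C o 1%:M != 0 -> in_outcome_code C o.
Proof.
move=> Hs /matrix0Pn [i [j Hij]]; split => //; exists (basis_vec j).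
split; first exact: sqnorm_basis.
rewrite sqnormE; apply/eqP => H0.
pose F := fun l => ((kraus C o 1%:M *m basis_vec j) l 0)^* * (kraus C o 1%:M *m basis_vec j) l 0.
have Hnn : forall l, xpredT l -> 0 <= F l.
  by move=> l _; rewrite /F mulrC -normCK exprn_ge0.
have := @psumr_eq0P _ _ xpredT F Hnn H0 i erefl.
rewrite /F mul_basis => /eqP; rewrite mulf_eq0 conjC_eq0 orbb => H1.
by rewrite H1 in Hij.
Qed.

Lemma code_nz {n} (C : circuit n) o : in_outcome_code C o -> kraus C o 1%:M != 0.
Proof.
move=> [_ [psi [_ H]]]; apply/eqP => E; move: H; rewrite E mul0mx sqnormE big1 ?eqxx //.
by move=> l _; rewrite mxE mulr0.
Qed.

Lemma invmxM_unit {n} (A B : op_mx n) : A \in unitmx -> B \in unitmx ->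
  invmx (A *m B) = invmx B *m invmx A.
Proof.
move=> uA uB.
have uAB : A *m B \in unitmx by rewrite unitmx_mul uA uB.
rewrite -[RHS]mul1mx -(mulVmx uAB) -mulmxA.
have -> : A *m B *m (invmx B *m invmx A) = 1%:M.
  by rewrite mulmxA -(mulmxA A) mulmxV // mulmx1 mulmxV.
by rewrite mulmx1.
Qed.

Lemma In_nth_ex {T} (x0 x : T) s : List.In x s -> exists2 i, (i < size s)%N & nth x0 s i = x.
Proof.
elim: s => [|y s IH] //= [->|H]; first by exists 0%N.
by have [i Hi <-] := IH H; exists i.+1.
Qed.

Lemma In_filter {T} (p : pred T) x s : List.In x (filter p s) -> p x /\ List.In x s.
Proof.
elim: s => [|y s IH] //=; case: ifP => Hy /=.
  by move=> [<-|H]; [split=> //; left | have [? ?] := IH H; split => //; right].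
by move=> H; have [? ?] := IH H; split => //; right.
Qed.

Lemma In_map_fst {T U} (x : T * U) s : List.In x s -> List.In x.1 (map fst s).
Proof. by move=> H; apply: List.in_map. Qed.

Lemma pairwise_In {T} (r r' : rel T) s :
  (forall x y, List.In x s -> List.In y s -> r x y -> r' x y) ->
  pairwise r s -> pairwise r' s.
Proof.
elim: s => [|x s IH] //= H /andP [Hall Hpw]; apply/andP; split.
  elim: s {IH Hpw} H Hall => [|y s IHs] //= H /andP [Hxy Hall]; apply/andP; split.
    by apply: H; [left|right; left|].
  apply: IHs => // a b Ha Hb; apply: H.
    by case: Ha => [<-|Ha]; [left|right; right].
  by case: Hb => [<-|Hb]; [left|right; right].
apply: IH => // a b Ha Hb; apply: H; by right.
Qed.

Lemma depth_ge {n} (C : circuit n) o : List.In o C -> (lvl o <= depth C)%N.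
Proof.
rewrite /depth; elim: C => [|x C IH] //= [<-|H]; rewrite big_cons.
  exact: leq_maxl.
by apply: leq_trans (IH H) _; exact: leq_maxr.
Qed.



Definition Rlv {n} (a b : operation n) : bool :=
  (lvl a <= lvl b)%N && ((lvl a == lvl b) ==> [disjoint supp a & supp b]).

Lemma wf_pairwise {n} (C : circuit n) : well_formed C -> pairwise Rlv C.
Proof.
move=> [_ H]; apply/(pairwiseP (Op 0 set0 (Gate 1%:M))) => i j Hi Hj Hij.
have [H1 H2] := H i j (introT andP (conj Hij Hj)).
by apply/andP; split => //; apply/implyP => /eqP; apply: H2.
Qed.

Lemma wf_ok {n} (C : circuit n) : well_formed C -> forall o, List.In o C -> op_ok o.
Proof.
move=> [H _] o Ho; have [i Hi <-] := In_nth_ex (Op 0 set0 (Gate 1%:M)) Ho.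
exact: H.
Qed.

Lemma filter_nil {T} (p : pred T) s : (forall x, List.In x s -> ~~ p x) -> filter p s = [::].
Proof.
elim: s => [|x s IH] //= H; rewrite (negbTE (H x (or_introl erefl))) IH // => y Hy.
by apply: H; right.
Qed.

Lemma In_map_inv {T U} (f : T -> U) y s : List.In y (map f s) -> exists2 x, List.In x s & f x = y.
Proof. by move/List.in_map_iff => [x [<- Hx]]; exists x. Qed.

Lemma Mk {n} (C : circuit n) (A : seq (operation n * bool)) (F : fault n) :
  (forall x, List.In x A -> op_ok x.1) ->
  pairwise (fun x y => Rlv x.1 y.1) A ->
  map fst A = C ->
  (forall k, F k = PFa A k) ->
  forall i, (i <= depth C)%N ->
  exists c, invmx (Vo (map fst (filter (fun x => depth C - i < lvl x.1)%N A))) *m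
            Wa (filter (fun x => depth C - i < lvl x.1)%N A) = c *: pauli_mx (bc_aux C F i).
Proof.
move=> Hok Hpw HC HF.
have Hle x : List.In x A -> (lvl x.1 <= depth C)%N.
  by move=> Hx; apply: depth_ge; rewrite -HC; apply: In_map_fst.
have Hpos x : List.In x A -> (0 < lvl x.1)%N by move=> Hx; have [] := Hok x Hx.
elim => [|i IH] Hi.
  rewrite subn0 filter_nil; last by move=> x Hx; rewrite -leqNgt; apply: Hle.
  rewrite /= /Vo /Wa /= invmx1 mul1mx; exists 1; rewrite scale1r HF PFa_filter //.
  rewrite filter_nil ?pauli_mx_id // => x Hx; have := Hle x Hx.
  by apply: contraL => /eqP ->; rewrite ltnn.
set D := depth C in Hi IH *.
have [c Hc] := IH (ltnW Hi).
set k := (D - i.+1)%N.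
have E : (D - i = k.+1)%N by rewrite /k; lia.
rewrite E in Hc.
set L := filter (fun x => lvl x.1 == k.+1) A.
set B := filter (fun x => k.+1 < lvl x.1)%N A.
have HA2 : filter (fun x => k < lvl x.1)%N A = L ++ B.
  rewrite -(filter_split (f := fun x => lvl x.1) k.+1 (s := filter (fun x => k < lvl x.1)%N A)).
    rewrite -!filter_predI /L /B; congr (_ ++ _); apply: eq_filter => x /=.
      by apply/andP/eqP => [[]|->] //; lia.
    by apply/andP/idP => [[]|] //; lia.
  apply: pairwise_filter; apply: sub_pairwise Hpw => x y /andP [].
  by [].
have HinL x : List.In x L -> lvl x.1 = k.+1 /\ List.In x A.
  by move=> Hx; have [/eqP H1 H2] := In_filter Hx.
have HinB x : List.In x B -> List.In x A by move=> Hx; have [_ H2] := In_filter Hx.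
have okL : forall o, List.In o (map fst L) -> op_ok o.
  move=> o Ho; have [x Hx <-] := In_map_inv Ho; apply: Hok; exact: (HinL x Hx).2.
have okB : forall o, List.In o (map fst B) -> op_ok o.
  move=> o Ho; have [x Hx <-] := In_map_inv Ho; apply: Hok; exact: HinB.
have uL := unitary_unit (Vo_clif okL).1.
have uB := unitary_unit (Vo_clif okB).1.
rewrite HA2 map_cat Vo_cat Wa_cat invmxM_unit //.
rewrite (Wa_split (A := L)); first last.
- apply: pairwise_In (pairwise_filter _ Hpw) => x y Hx Hy /andP [_].
  by have [-> _] := HinL x Hx; have [-> _] := HinL y Hy; rewrite eqxx.
- by move=> x /HinL [_ Hx]; apply: Hok.
have [d Hd] := @Ha_pauli _ L k (fun x Hx => introT eqP (etrans (f_equal (fun m => m - 1)%N (HinL x Hx).1) (subn1 k.+1))).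
have HFk : F k = PFa L k by rewrite HF PFa_filter.
have -> : bc_aux C F i.+1 = pauli_mul (F (D - i.+1)%N) (conjP (U_level C (D - i)) (bc_aux C F i)) by [].
rewrite -/k E U_level_Vo HFk.
have -> : filter (fun o => lvl o == k.+1) C = map fst L by rewrite -HC filter_map.
have [e He] := conjP_spec (bc_aux C F i) (Vo_clif okL).
exists (c * e * d * (-1) ^+ sym (conjP (Vo (map fst L)) (bc_aux C F i)) (PFa L k)).
rewrite (_ : invmx (Vo [seq i0.1 | i0 <- L]) *m invmx (Vo [seq i0.1 | i0 <- B]) *m
   (Wa B *m (Vo [seq i0.1 | i0 <- L] *m Ha L)) = invmx (Vo [seq i0.1 | i0 <- L]) *m
   (invmx (Vo [seq i0.1 | i0 <- B]) *m Wa B) *m Vo [seq i0.1 | i0 <- L] *m Ha L);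
  last by rewrite !mulmxA.
rewrite Hc Hd -scalemxAr -scalemxAr -scalemxAl -scalemxAl He -scalemxAl pauli_mxM pauli_mulC !scalerA.
by congr (_ *: _); congr (_ * _); rewrite -mulrA mulrC.
Qed.




Lemma Csplit {n} (C : circuit n) k : well_formed C ->
  filter (fun o => lvl o <= k)%N C ++ filter (fun o => k < lvl o)%N C = C.
Proof.
move=> WF; apply: filter_split; apply: sub_pairwise (wf_pairwise WF) => x y /andP [] //.
Qed.

Lemma key {n} (C : circuit n) k w : well_formed C -> (k <= depth C)%N -> in_outcome_perp C w ->
  exists c, invmx (Vo (filter (fun o => k < lvl o)%N C)) *m
              Wa (filter (fun x => k < lvl x.1)%N (ann C w))
            = c *: pauli_mx (back_cumulant C (F_of C w) k) /\
     invmx (Vo (filter (fun o => k < lvl o)%N C)) *m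
              Wa (filter (fun x => k < lvl x.1)%N (ann C w)) *m
       kraus (filter (fun o => lvl o <= k)%N C)
             (nseq (nmeas (filter (fun o => lvl o <= k)%N C)) false) 1%:M
     = kraus (filter (fun o => lvl o <= k)%N C)
             (nseq (nmeas (filter (fun o => lvl o <= k)%N C)) false) 1%:M.
Proof.
move=> WF kD [Hsz Hperp].
set C1 := filter (fun o => lvl o <= k)%N C.
set C2 := filter (fun o => k < lvl o)%N C.
set K1 := kraus C1 _ 1%:M.
set Aw := ann C w.
have HAw : map fst Aw = C by apply: map_fst_ann.
have Hok : forall x, List.In x Aw -> op_ok x.1.
  by move=> x Hx; apply: (wf_ok WF); rewrite -HAw; apply: In_map_fst.
have Hpw : pairwise (fun x y => Rlv x.1 y.1) Aw.
  by have := wf_pairwise WF; rewrite -HAw pairwise_map.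
have HC2 : map fst (filter (fun x => k < lvl x.1)%N Aw) = C2 by rewrite /C2 /C1 -HAw filter_map.
have HC1 : map fst (filter (fun x => lvl x.1 <= k)%N Aw) = C1 by rewrite /C2 /C1 -HAw filter_map.
have okC2 : forall o, List.In o C2 -> op_ok o.
  by move=> o Ho; apply: (wf_ok WF); have [] := In_filter Ho.
have uC2 := unitary_unit (Vo_clif okC2).1.
have [c Hc] := Mk Hok Hpw HAw (fun k => F_of_ann C w k) (leq_subr k (depth C)).
rewrite subKn // HC2 in Hc.
exists c; split.
  by rewrite Hc /back_cumulant kD.
have HAsplit : filter (fun x => lvl x.1 <= k)%N Aw ++ filter (fun x => k < lvl x.1)%N Aw = Aw.
  by apply: filter_split; apply: sub_pairwise Hpw => x y /andP [].
rewrite -mulmxA.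
have -> : Wa (filter (fun x => k < lvl x.1)%N Aw) *m K1 = Vo C2 *m K1.
  have H := @kraus_parity _ (filter (fun x => k < lvl x.1)%N Aw) K1 false.
  rewrite HC2 scale1r in H; apply: H.
  move=> o Ho Hk.
  set oo := nseq (nmeas C1) false ++ o.
  have Hkr : kraus C oo 1%:M = kraus C2 o K1.
    by rewrite -{1}(Csplit k WF) kraus_cat // size_nseq.
  have Hcode : in_outcome_code C oo.
    apply: nz_code; last by rewrite Hkr.
    by rewrite size_cat size_nseq Ho -nmeas_cat Csplit.
  have := Hperp oo Hcode; rewrite dotb_ann -/Aw -{1}HAsplit.
  by rewrite /oo -HC1 dota_cat_zero.
by rewrite mulKmx.
Qed.

Unset Implicit Arguments.

Theorem mainTheorem14 (n : nat) (C : circuit n) :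
  well_formed C ->
  linear_outcome_code C ->
  forall u v : seq bool,
    in_outcome_perp C u -> in_outcome_perp C v ->
    fault_comm (depth C) (back_cumulant C (F_of C u)) (back_cumulant C (F_of C v))
      = false.
Proof.
move=> WF [zero _] u v Pu Pv.
rewrite /fault_comm big1 // => k _.
have kD : (k <= depth C)%N by rewrite -ltnS ltn_ord.
have [cu [Hu Ku]] := key WF kD Pu.
have [cv [Hv Kv]] := key WF kD Pv.
set C1 := filter (fun o => lvl o <= k)%N C in Ku Kv.
set C2 := filter (fun o => k < lvl o)%N C in Hu Hv Ku Kv.
set K1 := kraus C1 _ 1%:M in Ku Kv.
set Xu := invmx (Vo C2) *m _ in Hu Ku.
set Xv := invmx (Vo C2) *m _ in Hv Kv.
have K1nz : K1 != 0.
  apply/eqP => E; have := code_nz zero.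
  rewrite -{1 2}(Csplit k WF) nmeas_cat nseqD kraus_cat ?size_nseq //.
  by rewrite -/C1 -/K1 E kraus0 eqxx.
apply/negP => Hc.
have XX : Xu *m Xv = - (Xv *m Xu).
  rewrite Hu Hv -!scalemxAl -!scalemxAr pauli_mx_comm Hc !scalerA expr1.
  by rewrite mulrN1 scaleNr mulrC.
have : K1 = - K1.
  rewrite -{1}Ku -{1}Kv mulmxA XX mulNmx -mulmxA Ku Kv //.
move/eqP; rewrite -subr_eq0 opprK -mulr2n -scaler_nat scaler_eq0 pnatr_eq0 /=.
by rewrite (negbTE K1nz).
Qed.
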